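(* Let $X$ be a periodic semigroup, $e\in E(X)$, and for $n\in\mathbb N$ let $Z_n=\{z\in Z(X): z^n\in H_e\}$. If for some $\ell\in\mathbb N$ the set $Z_\ell\setminus H_e$ is infinite, then there exist a finite set $F\subseteq Z_\ell$ and an infinite set $A\subseteq Z_\ell\setminus FX^1$ such that $AA\subseteq F\cup H_e\subseteq FX^1$.
   Context: Periodic: every element has an idempotent power. $E(X)$: idempotents; $H_e$: maximal subgroup containing $e$; $Z(X)$: center. $X^1=X\cup\{1\}$ with adjoined identity, $FX^1=\{fx:f\in F,x\in X^1\}$, $AA=\{ab:a,b\in A\}$. *)

(* Defs.v *)
From Stdlib Require Import List.
Set Implicit Arguments.

Section Semigroup.
Variables (T : Type) (mul : T -> T -> T).

(* positive powers: spow x n = x^n for n >= 1 (spow x 0 := x, never used) *)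
Fixpoint spow (x : T) (n : nat) : T :=
  match n with
  | 0 => x
  | 1 => x
  | S m => mul (spow x m) x
  end.

Definition idempotent (e : T) : Prop := mul e e = e.

Definition periodic : Prop :=
  forall x, exists n, 1 <= n /\ idempotent (spow x n).

Definition center (z : T) : Prop := forall x, mul z x = mul x z.

Definition subgroup_with_id (G : T -> Prop) (e : T) : Prop :=
  G e /\
  (forall x y, G x -> G y -> G (mul x y)) /\
  (forall x, G x -> mul e x = x /\ mul x e = x) /\
  (forall x, G x -> exists y, G y /\ mul x y = e /\ mul y x = e).

(* H_e: the maximal subgroup containing the idempotent e, i.e. the union of
   all subgroups of X containing e (any such subgroup has identity e). *)
Definition Hmax (e : T) (x : T) : Prop :=
  exists G, subgroup_with_id G e /\ G x.

Definition Zn (e : T) (n : nat) (z : T) : Prop :=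
  center z /\ Hmax e (spow z n).

Definition FX1 (F : T -> Prop) (y : T) : Prop :=
  exists f, F f /\ (y = f \/ exists x, y = mul f x).

End Semigroup.

Definition finite_set (T : Type) (S : T -> Prop) : Prop :=
  exists l : list T, forall x, S x -> In x l.

Definition infinite_set (T : Type) (S : T -> Prop) : Prop := ~ finite_set S.

(* Main.v *)
Require Import Defs.
From Stdlib Require Import Arith List Lia Classical ClassicalEpsilon FinFun.
Set Implicit Arguments.

Lemma fin_sub (T : Type) (P Q : T -> Prop) :
  finite_set Q -> (forall x, P x -> Q x) -> finite_set P.
Proof. intros [l Hl] H; exists l; auto. Qed.

Lemma fin_union (T : Type) (P Q : T -> Prop) :
  finite_set P -> finite_set Q -> finite_set (fun x => P x \/ Q x).
Proof.
  intros [l1 H1] [l2 H2]; exists (l1 ++ l2); intros x [Hx|Hx];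
  apply in_or_app; auto.
Qed.

Lemma inf_nonempty (T : Type) (P : T -> Prop) : infinite_set P -> exists x, P x.
Proof.
  intros H; apply NNPP; intro N; apply H; exists nil; intros x Hx; apply N; eauto.
Qed.

Lemma inf_split (T : Type) (P Q R : T -> Prop) :
  infinite_set P -> (forall x, P x -> Q x \/ R x) -> finite_set R -> infinite_set Q.
Proof.
  intros HP H HR HQ; apply HP; eapply fin_sub; [eapply fin_union; [exact HQ|exact HR]|]; simpl; auto.
Qed.

Lemma pigeon (T U : Type) (P : T -> Prop) (f : T -> U) (l : list U) :
  infinite_set P -> (forall x, P x -> In (f x) l) ->
  exists c, In c l /\ infinite_set (fun x => P x /\ f x = c).
Proof.
  revert P; induction l as [|a l IH]; intros P HP Hl.
  - exfalso; apply HP; exists nil; intros x Hx; apply (Hl x Hx).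
  - destruct (classic (infinite_set (fun x => P x /\ f x = a))) as [Ha|Ha].
    + exists a; split; simpl; auto.
    + assert (Hf : finite_set (fun x => P x /\ f x = a)) by (apply NNPP; auto).
      destruct (IH (fun x => P x /\ f x <> a)) as [c [Hc Hi]].
      * apply (inf_split HP (Q := fun x => P x /\ f x <> a) (R := fun x => P x /\ f x = a)); auto.
        intros x Hx; destruct (classic (f x = a)); auto.
      * intros x [Hx Hn]; destruct (Hl x Hx); [congruence|auto].
      * exists c; split; [simpl; auto|].
        intro Hfin; apply Hi; eapply fin_sub; [exact Hfin|]; intros x [[? ?] ?]; auto.
Qed.

Lemma inj_inf (T : Type) (P : T -> Prop) (u : nat -> T) :
  (forall n, P (u n)) -> (forall i j, u i = u j -> i = j) -> infinite_set P.
Proof.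
  intros HP Hu [l Hl].
  assert (ND : NoDup (map u (seq 0 (S (length l))))).
  { apply Injective_map_NoDup; [intros i j; apply Hu| apply seq_NoDup]. }
  assert (Hi : incl (map u (seq 0 (S (length l)))) l).
  { intros x Hx; apply in_map_iff in Hx; destruct Hx as [n [<- _]]; auto. }
  pose proof (NoDup_incl_length ND Hi) as Hle.
  rewrite length_map, length_seq in Hle; lia.
Qed.

Lemma bound_list (T : Type) (P : T -> Prop) (Q : nat -> T -> Prop) :
  (forall c, P c -> exists j, Q j c) ->
  forall l : list T, exists N, forall c, In c l -> P c -> exists j, j < N /\ Q j c.
Proof.
  intros H l; induction l as [|a l [N IH]].
  - exists 0; intros c [].
  - destruct (classic (P a)) as [Pa|Pa].
    + destruct (H a Pa) as [j0 Hj0]. exists (max N (S j0)).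
      intros c [<-|Hc] Pc; [exists j0; split; [lia|auto]|].
      destruct (IH c Hc Pc) as [j [? ?]]; exists j; split; [lia|auto].
    + exists N; intros c [<-|Hc] Pc; [contradiction|auto].
Qed.

Lemma min_ex (P : nat -> Prop) n : P n -> exists k, P k /\ forall j, j < k -> ~ P j.
Proof.
  revert n; induction n as [n IH] using (well_founded_induction Wf_nat.lt_wf); intros Pn.
  destruct (classic (exists j, j < n /\ P j)) as [[j [Hj Pj]]|N].
  - apply (IH j Hj Pj).
  - exists n; split; auto; intros j Hj Pj; apply N; eauto.
Qed.

Section Core.
Variables (T : Type) (mul : T -> T -> T) (S Zer : T -> Prop) (t0 : T).
Hypothesis hS : infinite_set S.
Hypothesis hclos : forall a b, S a -> S b -> S (mul a b) \/ Zer (mul a b).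
Hypothesis hcom2 : forall m p q, S m -> S p -> S q -> Zer (mul (mul p m) (mul q m)).
Hypothesis hsq : forall a, S a -> Zer (mul a a).
Hypothesis hcomm : forall a b, S a -> S b -> mul a b = mul b a.
Hypothesis hstrict : forall b b' y, S b -> S b' -> b <> mul b' b /\ b <> mul (mul b' b) y.

Definition V a y := S y /\ exists x, S x /\ y = mul a x.
Hypothesis HV : forall a, S a -> finite_set (V a).

Definition Good (B B' : T -> Prop) b c :=
  (forall x, B' x -> B x /\ x <> b) /\ infinite_set B' /\
  ((forall x, B' x -> Zer (mul b x)) \/ (S c /\ forall x, B' x -> mul b x = c)).

Lemma step_ex B : infinite_set B -> (forall x, B x -> S x) -> forall b, B b ->
  exists p : (T -> Prop) * T, Good B (fst p) b (snd p).
Proof.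
  intros HB HBS b Hb.
  assert (H1 : infinite_set (fun x => B x /\ x <> b)).
  { apply (inf_split HB (R := fun x => x = b)).
    - intros x Hx; destruct (classic (x = b)); auto.
    - exists (b :: nil); intros x ->; simpl; auto. }
  destruct (classic (infinite_set (fun x => (B x /\ x <> b) /\ Zer (mul b x)))) as [Hr|Hr].
  - exists (fun x => (B x /\ x <> b) /\ Zer (mul b x), t0); simpl.
    split; [intros x [? ?]; auto|split; auto].
    left; intros x [? ?]; auto.
  - assert (H2 : infinite_set (fun x => (B x /\ x <> b) /\ ~ Zer (mul b x))).
    { apply (inf_split H1 (R := fun x => (B x /\ x <> b) /\ Zer (mul b x))).
      - intros x Hx; destruct (classic (Zer (mul b x))); auto.
      - apply NNPP; auto. }
    destruct (HV (HBS b Hb)) as [lv Hlv].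
    destruct (pigeon (fun x => mul b x) lv H2) as [c [_ Hc]].
    + intros x [[Bx _] Nz]; apply Hlv; split; [|exists x; split; auto].
      destruct (hclos (HBS b Hb) (HBS x Bx)); [auto|contradiction].
    + exists (fun x => ((B x /\ x <> b) /\ ~ Zer (mul b x)) /\ mul b x = c, c); simpl.
      split; [intros x [[? ?] ?]; auto|split; auto].
      right; split; [|intros x [? ?]; auto].
      destruct (inf_nonempty Hc) as [x [[[Bx _] Nz] <-]].
      destruct (hclos (HBS b Hb) (HBS x Bx)); [auto|contradiction].
Qed.

Definition pick (B : T -> Prop) : T := epsilon (inhabits t0) B.
Definition nextp (B : T -> Prop) : (T -> Prop) * T :=
  epsilon (inhabits ((fun _ => False), t0)) (fun p => Good B (fst p) (pick B) (snd p)).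
Fixpoint seqB n := match n with 0 => S | Datatypes.S n => fst (nextp (seqB n)) end.
Definition bs n := pick (seqB n).
Definition cs n := snd (nextp (seqB n)).

Lemma inv n : infinite_set (seqB n) /\ (forall x, seqB n x -> S x) /\
   seqB n (bs n) /\ Good (seqB n) (seqB (Datatypes.S n)) (bs n) (cs n).
Proof.
  induction n as [|n IH].
  - assert (Hb : seqB 0 (bs 0)).
    { unfold bs, pick. apply epsilon_spec. apply inf_nonempty; exact hS. }
    split; [exact hS|split; [auto|split; auto]].
    unfold cs; simpl. apply (epsilon_spec (inhabits ((fun _ => False), t0))
       (fun p => Good S (fst p) (pick S) (snd p))).
    apply step_ex; auto.
  - destruct IH as [_ [HS [_ [HG1 [HG2 _]]]]].
    assert (HS' : forall x, seqB (Datatypes.S n) x -> S x) by (intros x Hx; apply HS, HG1, Hx).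
    assert (Hb : seqB (Datatypes.S n) (bs (Datatypes.S n))).
    { unfold bs, pick. apply epsilon_spec. apply inf_nonempty; exact HG2. }
    split; [exact HG2|split; [auto|split; auto]].
    unfold cs. change (seqB (Datatypes.S (Datatypes.S n))) with (fst (nextp (seqB (Datatypes.S n)))).
    unfold nextp at 1. unfold nextp at 1.
    apply (epsilon_spec (inhabits ((fun _ => False), t0))
       (fun p => Good (seqB (Datatypes.S n)) (fst p) (pick (seqB (Datatypes.S n))) (snd p))).
    apply step_ex; auto.
Qed.

Lemma mono n d x : seqB (n + d) x -> seqB n x.
Proof.
  revert x; induction d as [|d IH]; intros x Hx.
  - rewrite Nat.add_0_r in Hx; auto.
  - rewrite Nat.add_succ_r in Hx. apply IH.
    destruct (inv (n + d)) as [_ [_ [_ [HG _]]]]. apply (HG x Hx).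
Qed.

Lemma later i j : i < j -> seqB (Datatypes.S i) (bs j).
Proof.
  intros H. apply mono with (d := j - Datatypes.S i).
  replace (Datatypes.S i + (j - Datatypes.S i)) with j by lia.
  destruct (inv j) as [_ [_ [? _]]]; auto.
Qed.

Lemma bsS n : S (bs n).
Proof. destruct (inv n) as [_ [H [H2 _]]]; auto. Qed.

Lemma bs_neq i j : i < j -> bs j <> bs i.
Proof.
  intros H. destruct (inv i) as [_ [_ [_ [HG _]]]]. apply (HG _ (later H)).
Qed.

Definition blue i := S (cs i) /\ forall x, seqB (Datatypes.S i) x -> mul (bs i) x = cs i.

Lemma rel i j : i < j -> Zer (mul (bs i) (bs j)) \/ (blue i /\ mul (bs i) (bs j) = cs i).
Proof.
  intros H. destruct (inv i) as [_ [_ [_ [_ [_ [Hr|[Hc Hb]]]]]]].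
  - left; apply Hr, later, H.
  - right; split; [split; auto|apply Hb, later, H].
Qed.

Lemma core_main : exists A C : T -> Prop, infinite_set A /\ finite_set C /\
  (forall a, A a -> S a) /\ (forall c, C c -> S c) /\
  (forall a b, A a -> A b -> Zer (mul a b) \/ C (mul a b)) /\
  (forall a c, A a -> C c -> a <> c /\ forall y, a <> mul c y).
Proof.
  set (C := fun c => exists i, blue i /\ c = cs i).
  destruct (classic (finite_set C)) as [[lc Hlc]|Hinf].
  - destruct (bound_list C (fun j c => blue j /\ c = cs j)
       (fun c Hc => Hc) lc) as [N HN].
    exists (fun a => exists i, N <= i /\ a = bs i), C.
    split; [|split; [exists lc; auto|split; [|split; [|split]]]].
    + apply (inj_inf (fun n => bs (N + n))); [intro n; exists (N + n); split; [lia|auto]|].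
      intros i j Hij. destruct (Nat.lt_trichotomy i j) as [H|[H|H]]; auto.
      * exfalso; apply (@bs_neq (N + i) (N + j)); [lia|auto].
      * exfalso; apply (@bs_neq (N + j) (N + i)); [lia|auto].
    + intros a [i [_ ->]]; apply bsS.
    + intros c [i [[Hc _] ->]]; auto.
    + intros a b [i [_ ->]] [j [_ ->]].
      destruct (Nat.lt_trichotomy i j) as [H|[<-|H]].
      * destruct (rel H) as [?|[Hb ->]]; [auto|right; exists i; auto].
      * left; apply hsq, bsS.
      * rewrite hcomm by apply bsS.
        destruct (rel H) as [?|[Hb ->]]; [auto|right; exists j; auto].
    + intros a c [i [Hi ->]] Hc.
      destruct (HN c (Hlc c Hc) Hc) as [j [Hj [[_ Hb] ->]]].
      rewrite <- (Hb (bs i)) by (apply later; lia).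
      split; [apply (@hstrict (bs i) (bs j) (bs i) (bsS i) (bsS j))|intro y; apply (@hstrict (bs i) (bs j) y (bsS i) (bsS j))].
  - exists C, (fun _ => False).
    split; [auto|split; [exists nil; intros _ []|split; [|split; [intros _ []|split]]]].
    + intros c [i [[Hc _] ->]]; auto.
    + intros a b [i [[_ Hi] ->]] [j [[_ Hj] ->]]. left.
      set (m := Datatypes.S (i + j)).
      rewrite <- (Hi (bs m)) by (apply later; lia).
      rewrite <- (Hj (bs m)) by (apply later; lia).
      apply hcom2; apply bsS.
    + intros _ _ _ [].
Qed.
End Core.

Section Alg.
Variables (T : Type) (mul : T -> T -> T) (e : T).
Hypothesis mulA : forall x y z, mul x (mul y z) = mul (mul x y) z.
Hypothesis He : mul e e = e.
Notation H := (Hmax mul e).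
Notation pw := (spow mul).
Notation Z := (center mul).

Lemma pw_S x n : 1 <= n -> pw x (Datatypes.S n) = mul (pw x n) x.
Proof. intros Hn; destruct n; [lia|reflexivity]. Qed.

Lemma pw_add x n m : 1 <= n -> 1 <= m -> pw x (n + m) = mul (pw x n) (pw x m).
Proof.
  intros Hn Hm; induction m as [|m IH]; [lia|].
  destruct m as [|m].
  - rewrite Nat.add_1_r, pw_S by lia; reflexivity.
  - rewrite Nat.add_succ_r, pw_S by lia. rewrite IH by lia.
    rewrite (@pw_S x (Datatypes.S m)) by lia. rewrite mulA; reflexivity.
Qed.

Lemma pw_mul x a b : 1 <= a -> 1 <= b -> pw (pw x a) b = pw x (a * b).
Proof.
  intros Ha Hb; induction b as [|b IH]; [lia|].
  destruct b as [|b]; [rewrite Nat.mul_1_r; reflexivity|].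
  rewrite pw_S by lia. rewrite IH by lia.
  replace (a * Datatypes.S (Datatypes.S b)) with (a * Datatypes.S b + a) by lia.
  rewrite pw_add by lia; reflexivity.
Qed.

Lemma pw_Z x n : Z x -> Z (pw x n).
Proof.
  intros Hx; induction n as [|n IH]; [exact Hx|].
  destruct n as [|n]; [exact Hx|].
  rewrite pw_S by lia. intros y. rewrite <- mulA, Hx, mulA, IH, <- mulA; reflexivity.
Qed.

Lemma Z_mul a b : Z a -> Z b -> Z (mul a b).
Proof. intros Ha Hb y. rewrite <- mulA, Hb, mulA, Ha, mulA; reflexivity. Qed.

Lemma pw_mulc a b n : Z a -> 1 <= n -> pw (mul a b) n = mul (pw a n) (pw b n).
Proof.
  intros Ha Hn; induction n as [|n IH]; [lia|].
  destruct n as [|n]; [reflexivity|].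
  rewrite !pw_S by lia. rewrite IH by lia.
  (* (a^n b^n)(a b) = (a^n a)(b^n b) *)
  set (A := pw a (Datatypes.S n)); set (B := pw b (Datatypes.S n)).
  rewrite <- (mulA A B (mul a b)), (mulA B a b), <- (Ha B), <- (mulA a B b), mulA.
  reflexivity.
Qed.

Lemma pw_e z n : mul e z = z -> mul e (pw z n) = pw z n.
Proof.
  intros Hz; induction n as [|n IH]; [exact Hz|].
  destruct n as [|n]; [exact Hz|].
  rewrite pw_S by lia. rewrite mulA, IH; reflexivity.
Qed.

Definition G0 x := mul e x = x /\ mul x e = x /\
  exists y, mul e y = y /\ mul y e = y /\ mul x y = e /\ mul y x = e.

Lemma G0_sub : subgroup_with_id mul G0 e.
Proof.
  split; [|split; [|split]].
  - split; [auto|split; [auto|exists e; auto]].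
  - intros x x' [h1 [h2 [y [k1 [k2 [k3 k4]]]]]] [h1' [h2' [y' [k1' [k2' [k3' k4']]]]]].
    split; [rewrite mulA, h1; auto|split; [rewrite <- mulA, h2'; auto|]].
    exists (mul y' y). split; [rewrite mulA, k1'; auto|split; [rewrite <- mulA, k2; auto|split]].
    + rewrite <- mulA, (mulA x' y' y), k3', k1, k3; auto.
    + rewrite <- mulA, (mulA y x x'), k4, h1', k4'; auto.
  - intros x [h1 [h2 _]]; auto.
  - intros x [h1 [h2 [y [k1 [k2 [k3 k4]]]]]]. exists y; split; [|auto].
    split; [auto|split; [auto|exists x; auto]].
Qed.

Lemma G0_H x : G0 x -> H x.
Proof. intros Hx; exists G0; split; [apply G0_sub|auto]. Qed.

Lemma H_G0 x : H x -> G0 x.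
Proof.
  intros [G [[HGe [HGm [HGi HGv]]] Gx]].
  destruct (HGi x Gx) as [h1 h2]. destruct (HGv x Gx) as [y [Gy [k1 k2]]].
  destruct (HGi y Gy) as [h1' h2'].
  split; [auto|split; [auto|exists y; auto]].
Qed.

Lemma H_mul x y : H x -> H y -> H (mul x y).
Proof.
  intros Hx Hy; apply G0_H. destruct G0_sub as [_ [Hm _]]. apply Hm; apply H_G0; auto.
Qed.

Lemma H_pw x n : H x -> H (pw x n).
Proof.
  intros Hx; induction n as [|n IH]; [exact Hx|].
  destruct n as [|n]; [exact Hx|]. rewrite pw_S by lia. apply H_mul; auto.
Qed.

Lemma H_e x : H x -> mul e x = x.
Proof. intros Hx; apply (H_G0 Hx). Qed.

Lemma keyK z n : Z z -> 1 <= n -> mul e z = z -> H (pw z n) -> H z.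
Proof.
  intros Hz Hn Hez Hg.
  destruct n as [|n]; [lia|]. destruct n as [|n]; [exact Hg|].
  destruct (H_G0 Hg) as [_ [_ [h [k1 [k2 [k3 k4]]]]]].
  rewrite pw_S in k3, k4 by lia.
  apply G0_H. split; [auto|split; [rewrite Hz; auto|]].
  exists (mul (pw z (Datatypes.S n)) h).
  split; [rewrite mulA, pw_e; auto|split; [rewrite <- mulA, k2; auto|split]].
  - rewrite mulA, Hz. exact k3.
  - rewrite <- mulA, <- Hz, mulA. exact k3.
Qed.

Lemma lemG w f t m N : Z w -> Z f -> 1 <= m -> 1 <= N -> H (pw f m) ->
  w = mul f t -> H (pw w N) -> H (pw w m).
Proof.
  intros Hw Hf Hm HN Hfm Hwt HwN.
  apply (keyK (n := N)); auto.
  - apply pw_Z; auto.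
  - rewrite Hwt, pw_mulc by auto. rewrite mulA, H_e; auto.
  - rewrite !pw_mul by lia. rewrite Nat.mul_comm, <- pw_mul by lia. apply H_pw; auto.
Qed.

Lemma Zn_mono z m n : 1 <= m -> m <= n -> Zn mul e m z -> Zn mul e n z.
Proof.
  intros Hm Hmn [Hz Hzm]. split; [auto|].
  destruct (Nat.eq_dec m n) as [<-|Hne]; [auto|].
  change (H (pw (pw z n) 1)).
  apply (lemG (f := pw z m) (t := pw z (n - m)) (m := 1) (N := m)); auto; try lia.
  - apply pw_Z; auto.
  - apply pw_Z; auto.
  - rewrite <- pw_add by lia. f_equal; lia.
  - rewrite pw_mul by lia. rewrite Nat.mul_comm, <- pw_mul by lia. apply H_pw; auto.
Qed.

Lemma Zn_mul a b n : 1 <= n -> Zn mul e n a -> Zn mul e n b -> Zn mul e n (mul a b).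
Proof.
  intros Hn [Ha Ha'] [Hb Hb']; split; [apply Z_mul; auto|].
  rewrite pw_mulc by auto. apply H_mul; auto.
Qed.

Lemma HZ_Zn x n : Z x -> H x -> Zn mul e n x.
Proof. intros; split; [auto|apply H_pw; auto]. Qed.

End Alg.

Section Main.
Variables (T : Type) (mul : T -> T -> T) (e : T) (l k : nat).
Hypothesis mulA : forall x y z, mul x (mul y z) = mul (mul x y) z.
Hypothesis He : mul e e = e.
Hypothesis Hk2 : 2 <= k.
Hypothesis Hkl : k <= l.
Hypothesis Pk : infinite_set (fun z => Zn mul e k z /\ ~ Hmax mul e z).
Hypothesis finZ : finite_set (fun z => Zn mul e (k - 1) z /\ ~ Hmax mul e z).
Notation H := (Hmax mul e).
Notation pw := (spow mul).
Notation Z := (center mul).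
Let Zer := Zn mul e (k - 1).
Let S := fun z => Zn mul e k z /\ ~ Zer z.

Lemma LG w f t m N : Z w -> Z f -> 1 <= m -> 1 <= N -> H (pw f m) ->
  w = mul f t -> H (pw w N) -> H (pw w m).
Proof. intros; eapply lemG; eauto. Qed.

Lemma S_inf : infinite_set S.
Proof.
  apply (inf_split Pk (R := fun z => Zer z /\ ~ H z)); [|exact finZ].
  intros z [Hz Hn]; destruct (classic (Zer z)); [right|left]; unfold S; auto.
Qed.

Lemma block a f : S a -> Zer f -> ~ (a = f \/ exists x, a = mul f x).
Proof.
  intros [Ha Na] Hf [->|[x ->]]; [contradiction|].
  apply Na. destruct Ha as [Za Ha]. split; [auto|].
  change (H (pw (mul f x) (k - 1))).
  apply (@LG (mul f x) f x (k - 1) k); auto; try lia; apply Hf.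
Qed.

Lemma sqH m : Zn mul e k m -> H (pw (mul m m) (k - 1)).
Proof.
  intros [Zm Hm]. rewrite (pw_mulc mulA) by (auto; lia).
  rewrite <- (pw_add mul mulA) by lia.
  destruct (@Zn_mono T mul e mulA He m k (k - 1 + (k - 1))) as [_ R]; auto; try lia.
  split; auto.
Qed.

Lemma Zk_Zer_of_H z : Zn mul e k z -> H z -> Zer z.
Proof. intros [Zz _] Hz; apply (HZ_Zn mulA He); auto. Qed.

Lemma hclos a b : S a -> S b -> S (mul a b) \/ Zer (mul a b).
Proof.
  intros [Ha _] [Hb _].
  assert (Hab : Zn mul e k (mul a b)) by (apply (Zn_mul mulA He); auto; lia).
  destruct (classic (Zer (mul a b))); [right|left]; auto. split; auto.
Qed.

Lemma hcom2 m p q : S m -> S p -> S q -> Zer (mul (mul p m) (mul q m)).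
Proof.
  intros [Hm _] [Hp _] [Hq _].
  assert (Hw : Zn mul e k (mul (mul p m) (mul q m))).
  { apply (Zn_mul mulA He); try lia; apply (Zn_mul mulA He); auto; lia. }
  destruct Hw as [Zw Hw]. split; [auto|].
  apply (@LG _ (mul m m) (mul p q) (k - 1) k); auto; try lia.
  - apply (Z_mul mulA); apply Hm.
  - apply sqH; auto.
  - destruct Hp as [Zp _]; destruct Hq as [Zq _].
    rewrite (Zp m), (Zq m). rewrite <- !mulA. f_equal.
    rewrite (mulA p m q), (Zp m), <- mulA. reflexivity.
Qed.

Lemma hsq a : S a -> Zer (mul a a).
Proof.
  intros [Ha _]. split; [apply (Z_mul mulA); apply Ha|]. apply sqH; auto.
Qed.

Lemma hcomm a b : S a -> S b -> mul a b = mul b a.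
Proof. intros [[Za _] _] _; apply Za. Qed.

Lemma iter1 b b' : b = mul b' b -> forall n, 1 <= n -> b = mul (pw b' n) b.
Proof.
  intros Hb n Hn; induction n as [|n IH]; [lia|].
  destruct n as [|n]; [exact Hb|].
  rewrite (pw_S mul b' (n := Datatypes.S n)) by lia.
  rewrite <- mulA, <- Hb. apply IH; lia.
Qed.

Lemma iter2 b b' y : Z b' -> b = mul (mul b' b) y ->
  forall n, 1 <= n -> b = mul (pw b' n) (mul b (pw y n)).
Proof.
  intros Zb' Hb n Hn; induction n as [|n IH]; [lia|].
  destruct n as [|n]; [simpl; rewrite <- mulA in Hb; exact Hb|].
  rewrite IH at 1 by lia.
  rewrite Hb at 1. rewrite <- !mulA.
  rewrite (pw_S mul b' (n := Datatypes.S n)) by lia. rewrite <- mulA. f_equal. f_equal. f_equal.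
  replace (Datatypes.S (Datatypes.S n)) with (1 + Datatypes.S n) by lia.
  rewrite (pw_add mul mulA) by lia. reflexivity.
Qed.

Lemma hstrict b b' y : S b -> S b' -> b <> mul b' b /\ b <> mul (mul b' b) y.
Proof.
  intros [[Zb Hb] Nb] [[Zb' Hb'] _]; split; intro E; apply Nb;
    apply Zk_Zer_of_H; try (split; auto);
    change (H (pw b 1)).
  - apply (@LG b (pw b' k) b 1 k); auto; try lia.
    + apply (pw_Z mulA); auto.
    + apply iter1; auto; lia.
  - apply (@LG b (pw b' k) (mul b (pw y k)) 1 k); auto; try lia.
    + apply (pw_Z mulA); auto.
    + apply iter2; auto; lia.
Qed.

Lemma core_all : exists A C : T -> Prop, infinite_set A /\ finite_set C /\
  (forall a, A a -> S a) /\ (forall c, C c -> S c) /\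
  (forall a b, A a -> A b -> Zer (mul a b) \/ C (mul a b)) /\
  (forall a c, A a -> C c -> a <> c /\ forall y, a <> mul c y).
Proof.
  destruct (classic (exists a, S a /\ infinite_set (V mul S a))) as [[a [Sa Ha]]|NV].
  - exists (V mul S a), (fun _ => False).
    split; [auto|split; [exists nil; intros _ []|split; [|split; [intros _ []|split]]]].
    + intros y [? _]; auto.
    + intros y y' [_ [x [Sx ->]]] [_ [x' [Sx' ->]]]. left.
      rewrite (hcomm Sa Sx), (hcomm Sa Sx'). apply hcom2; auto.
    + intros _ _ _ [].
  - apply (core_main Zer e S_inf hclos hcom2 hsq hcomm hstrict).
    intros a Sa; apply NNPP; intro N; apply NV; eauto.
Qed.

Lemma main_sec : exists (F A : T -> Prop),
    finite_set F /\ (forall f, F f -> Zn mul e l f) /\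
    infinite_set A /\
    (forall a, A a -> Zn mul e l a /\ ~ FX1 mul F a) /\
    (forall a b, A a -> A b -> F (mul a b) \/ H (mul a b)) /\
    (forall y, F y \/ H y -> FX1 mul F y).
Proof.
  destruct core_all as [A [C [HA [HC [AS [CS [AP AC]]]]]]].
  destruct (inf_nonempty S_inf) as [a0 [[Za0 Ha0] _]].
  set (g := pw a0 k).
  assert (Hg : H g) by exact Ha0.
  assert (Zg : Z g) by (apply (pw_Z mulA); auto).
  assert (Zerg : Zer g) by (apply (HZ_Zn mulA He); auto).
  assert (Sl : forall z, S z -> Zn mul e l z).
  { intros z [Hz _]. apply (Zn_mono mulA He (m := k)); auto; lia. }
  exists (fun y => (Zer y /\ ~ H y) \/ y = g \/ C y), A.
  split; [|split; [|split; [auto|split; [|split]]]].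
  - apply fin_union; [exact finZ|apply fin_union; [exists (g :: nil); intros x ->; simpl; auto|exact HC]].
  - intros f [[Hf _]|[->|Hf]].
    + apply (Zn_mono mulA He (m := k - 1)); auto; lia.
    + apply (HZ_Zn mulA He); auto.
    + apply Sl, CS, Hf.
  - intros a Aa. split; [apply Sl, AS, Aa|].
    intros [f [Ff Hf]]. destruct Ff as [[Zf _]|[->|Cf]].
    + apply (block (AS a Aa) Zf Hf).
    + apply (block (AS a Aa) Zerg Hf).
    + destruct (AC a f Aa Cf) as [N1 N2]. destruct Hf as [?|[x ?]]; [apply N1|apply (N2 x)]; auto.
  - intros a b Aa Ab. destruct (AP a b Aa Ab) as [Zab|Cab].
    + destruct (classic (H (mul a b))); [right|left; left]; auto.
    + left; right; right; auto.
  - intros y [Fy|Hy].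
    + exists y; split; auto.
    + exists g; split; [right; left; auto|right].
      destruct (H_G0 Hg) as [_ [_ [h [_ [_ [k3 _]]]]]].
      exists (mul h y). rewrite mulA, k3, (H_e Hy). reflexivity.
Qed.
End Main.
Unset Implicit Arguments.

Theorem lemma7p1 (T : Type) (mul : T -> T -> T)
  (mulA : forall x y z, mul x (mul y z) = mul (mul x y) z)
  (Hper : periodic mul) (e : T) (He : idempotent mul e) (l : nat)
  (Hl : 1 <= l)
  (Hinf : infinite_set (fun z => Zn mul e l z /\ ~ Hmax mul e z)) :
  exists (F A : T -> Prop),
    finite_set F /\ (forall f, F f -> Zn mul e l f) /\
    infinite_set A /\
    (forall a, A a -> Zn mul e l a /\ ~ FX1 mul F a) /\
    (forall a b, A a -> A b -> F (mul a b) \/ Hmax mul e (mul a b)) /\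
    (forall y, F y \/ Hmax mul e y -> FX1 mul F y).
Proof.
  destruct (min_ex (fun n => infinite_set (fun z => Zn mul e n z /\ ~ Hmax mul e z)) l Hinf)
    as [k [Pk Pmin]].
  assert (Hk2 : 2 <= k).
  { destruct k as [|[|k]]; [| |lia]; exfalso; apply Pk; exists nil;
      intros z [[_ Hz] Nz]; exfalso; apply Nz; exact Hz. }
  assert (Hkl : k <= l).
  { destruct (Nat.le_gt_cases k l) as [?|Hlt]; [auto|]. exfalso; apply (Pmin l Hlt Hinf). }
  assert (finZ : finite_set (fun z => Zn mul e (k - 1) z /\ ~ Hmax mul e z)).
  { apply NNPP; apply Pmin; lia. }
  exact (main_sec mulA He Hk2 Hkl Pk finZ).
Qed.
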